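(* Let $P$ be an NL poset on $X_n$ with twin classes $\alpha_1,\ldots,\alpha_r$ and twin poset $P_\equiv$. For $\varphi\in\mathrm{Aut}(P)$ and a twin class $\alpha$, set $\pi(\varphi)(\alpha)=\varphi(\alpha)=\{\varphi(x):x\in\alpha\}$. Then $\pi$ is a well-defined group homomorphism $\mathrm{Aut}(P)\to\mathrm{Aut}(P_\equiv)$, and its kernel (the automorphisms mapping each $\alpha_i$ onto itself) consists exactly of all bijections of $X_n$ that restrict to a permutation of each $\alpha_i$, so that $\ker(\pi)\cong\prod_{i=1}^r\mathfrak S_{|\alpha_i|}$. In particular, $\pi$ is surjective onto $\mathrm{Aut}(P_\equiv)$ if and only if every $\psi\in\mathrm{Aut}(P_\equiv)$ preserves twin-class sizes, i.e., $|\psi(\alpha)|=|\alpha|$ for all twin classes $\alpha$.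
   Context: Let $X_n=\{0,1,\ldots,n-1\}$. A naturally labeled (NL) poset on $X_n$ is a partial order $\preceq$ on $X_n$ such that $x\preceq y$ implies $x\le y$ in the usual integer order. $\mathrm{Aut}(P)$ is the group of bijections $\sigma$ of $X_n$ with $x\preceq y\iff\sigma(x)\preceq\sigma(y)$. For $x\in X_n$, $D(x)=\{z: z\prec x\}$, $U(x)=\{z: x\prec z\}$; $x,y$ are twins if $D(x)=D(y)$ and $U(x)=U(y)$, and the equivalence classes are the twin classes. The twin poset $P_\equiv$ is the set of twin classes ordered by $\alpha\preceq_\equiv\beta$ iff $x\preceq y$ for (any) $x\in\alpha$, $y\in\beta$. $\mathfrak S_k$ is the symmetric group on $k$ letters. *)

(* Defs.v *)
From mathcomp Require Import all_boot all_fingroup.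
Set Implicit Arguments. Unset Strict Implicit. Unset Printing Implicit Defensive.
Local Open Scope group_scope.

Section TwinDefs.
Variable n : nat.
Variable le : rel 'I_n.

Definition is_NL_poset : Prop :=
  [/\ reflexive le, antisymmetric le, transitive le &
      forall x y : 'I_n, le x y -> (x <= y)%N].

Definition AutP : {set {perm 'I_n}} :=
  [set s : {perm 'I_n} | [forall x, forall y, le x y == le (s x) (s y)]].

Definition Dset (x : 'I_n) : {set 'I_n} := [set z | (z != x) && le z x].
Definition Uset (x : 'I_n) : {set 'I_n} := [set z | (z != x) && le x z].
Definition twin (x y : 'I_n) : bool := (Dset x == Dset y) && (Uset x == Uset y).

Definition twin_classes : {set {set 'I_n}} :=
  [set [set y | twin x y] | x : 'I_n].

Definition TC : finType := {A : {set 'I_n} | A \in twin_classes}.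

Definition twin_le (a b : TC) : bool :=
  [exists x in val a, exists y in val b, le x y].

Definition AutTw : {set {perm TC}} :=
  [set p : {perm TC} | [forall a, forall b, twin_le a b == twin_le (p a) (p b)]].

End TwinDefs.

(* psi is pi(phi): psi(alpha) = phi(alpha) for every twin class alpha *)
Definition induces {n : nat} (le : rel 'I_n) (phi : {perm 'I_n})
  (psi : {perm (TC le)}) : Prop :=
  forall a : TC le, val (psi a) = phi @: val a.
Arguments induces {n} le phi psi.

(* Main.v *)
Require Import Defs.
From mathcomp Require Import all_boot all_fingroup.
Set Implicit Arguments. Unset Strict Implicit. Unset Printing Implicit Defensive.
Local Open Scope group_scope.

Section Twin.
Variable n : nat.
Variable le : rel 'I_n.
Hypothesis le_refl : reflexive le.

Local Notation twin := (twin le).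
Definition cls (x : 'I_n) : {set 'I_n} := [set y | twin x y].

Lemma twin_refl : reflexive twin.
Proof. by move=> x; rewrite /Defs.twin !eqxx. Qed.
Lemma twin_sym : symmetric twin.
Proof. by move=> x y; rewrite /Defs.twin ![Dset _ y == _]eq_sym ![Uset _ y == _]eq_sym. Qed.
Lemma twin_trans : transitive twin.
Proof.
move=> y x z; rewrite /Defs.twin => /andP[/eqP-> /eqP->] /andP[/eqP-> /eqP->].
by rewrite !eqxx.
Qed.

Lemma cls_eq x y : twin x y -> cls x = cls y.
Proof.
move=> txy; apply/setP=> z; rewrite !inE; apply/idP/idP => h.
  by apply: twin_trans h; rewrite twin_sym.
exact: twin_trans h.
Qed.

Lemma cls_in x : x \in cls x.
Proof. by rewrite inE twin_refl. Qed.

Lemma cls_tc x : cls x \in twin_classes le.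
Proof. by apply/imsetP; exists x. Qed.

Definition clsT (x : 'I_n) : TC le := exist _ (cls x) (cls_tc x).

Lemma TC_ex (a : TC le) : exists x, val a = cls x.
Proof. by case: a => A /= /imsetP[x _ ->]; exists x. Qed.

Lemma TC_twin (a : TC le) x y : x \in val a -> y \in val a -> twin x y.
Proof.
have [z ->] := TC_ex a; rewrite !inE => h1 h2.
by apply: twin_trans h2; rewrite twin_sym.
Qed.

Lemma TC_eq (a b : TC le) x y : x \in val a -> y \in val b -> twin x y -> a = b.
Proof.
move=> xa yb txy; apply: val_inj.
have [z ez] := TC_ex a; have [w ew] := TC_ex b.
rewrite ez ew; apply: cls_eq.
move: xa yb; rewrite ez ew !inE => h1 h2.
apply: twin_trans h1 _; apply: twin_trans txy _; by rewrite twin_sym.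
Qed.

Lemma TC_cls (a : TC le) x : x \in val a -> a = clsT x.
Proof. by move=> xa; apply: (@TC_eq a (clsT x) x x xa (cls_in x) (twin_refl x)). Qed.

Lemma le_classes x y x' y' : twin x x' -> twin y y' -> x != y -> x' != y' ->
  le x y -> le x' y'.
Proof.
rewrite /Defs.twin => /andP[_ /eqP Ux] /andP[/eqP Dy _] nxy nxy' lxy.
have : x \in Dset le y by rewrite inE nxy lxy.
rewrite Dy inE => /andP[nxy2 lxy2].
have : y' \in Uset le x by rewrite inE eq_sym nxy2 lxy2.
by rewrite Ux inE => /andP[].
Qed.

Lemma twin_nle x y : twin x y -> x != y -> ~~ le x y.
Proof.
rewrite /Defs.twin => /andP[/eqP Dxy _] nxy; apply/negP => lxy.
have : x \in Dset le y by rewrite inE nxy lxy.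
by rewrite -Dxy inE eqxx.
Qed.

Lemma le_TC (a b : TC le) x y : x \in val a -> y \in val b ->
  le x y = if a == b then x == y else twin_le a b.
Proof.
move=> xa yb; case: eqVneq => [eab|nab].
  subst b; case: eqVneq => [->|nxy]; first exact: le_refl.
  by apply/negbTE/twin_nle => //; apply: TC_twin xa yb.
rewrite /twin_le.
apply/idP/idP => [lxy|].
  by apply/existsP; exists x; rewrite xa; apply/existsP; exists y; rewrite yb.
move=> /existsP[x' /andP[x'a /existsP[y' /andP[y'b lxy']]]].
have nt : forall u v, u \in val a -> v \in val b -> u != v.
  move=> u v ua vb; apply/eqP => euv; subst v.
  by move/eqP: nab; apply; apply: TC_eq ua vb (twin_refl u).
apply: (le_classes _ _ (nt _ _ x'a y'b) (nt _ _ xa yb) lxy').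
  exact: TC_twin x'a xa.
exact: TC_twin y'b yb.
Qed.

End Twin.
Set Implicit Arguments. Unset Strict Implicit. Unset Printing Implicit Defensive.
Local Open Scope group_scope.

Lemma perm_imset_memE (T : finType) (p : {perm T}) (A : {set T}) :
  p @: A = A -> forall x, (p x \in A) = (x \in A).
Proof. by move=> {1}<- x; rewrite mem_imset //; apply: perm_inj. Qed.

Lemma perm_imset_memP (T : finType) (p : {perm T}) (A : {set T}) :
  (forall x, (p x \in A) = (x \in A)) -> p @: A = A.
Proof.
move=> h; apply/setP => z; rewrite -{1}(permKV p z) mem_imset; last exact: perm_inj.
by rewrite -h permKV.
Qed.

Section Aut.
Variable n : nat.
Variable le : rel 'I_n.
Hypothesis le_refl : reflexive le.
Variable phi : {perm 'I_n}.
Hypothesis phiA : phi \in AutP le.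

Lemma AutP_le x y : le (phi x) (phi y) = le x y.
Proof. by move: phiA; rewrite inE => /forallP/(_ x)/forallP/(_ y)/eqP->. Qed.

Lemma Dset_phi x : Dset le (phi x) = phi @: Dset le x.
Proof.
apply/setP => z; rewrite -(permKV phi z) mem_imset; last exact: perm_inj.
by rewrite !inE AutP_le (inj_eq perm_inj).
Qed.

Lemma Uset_phi x : Uset le (phi x) = phi @: Uset le x.
Proof.
apply/setP => z; rewrite -(permKV phi z) mem_imset; last exact: perm_inj.
by rewrite !inE AutP_le (inj_eq perm_inj).
Qed.

Lemma twin_phi x y : twin le (phi x) (phi y) = twin le x y.
Proof.
rewrite /twin !Dset_phi !Uset_phi.
by rewrite !(inj_eq (imset_inj (@perm_inj _ phi))).
Qed.

Lemma cls_phi x : phi @: cls le x = cls le (phi x).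
Proof.
apply/setP => z; rewrite -(permKV phi z) mem_imset; last exact: perm_inj.
by rewrite !inE twin_phi.
Qed.

Lemma imset_tc (a : TC le) : phi @: val a \in twin_classes le.
Proof. by have [x ->] := TC_ex a; rewrite cls_phi cls_tc. Qed.

Definition indf (a : TC le) : TC le := exist _ (phi @: val a) (imset_tc a).

Lemma indf_inj : injective indf.
Proof.
move=> a b /(congr1 val) /= /(imset_inj (@perm_inj _ phi)); exact: val_inj.
Qed.

Definition indp : {perm TC le} := perm indf_inj.

Lemma indp_induces : induces le phi indp.
Proof. by move=> a; rewrite permE. Qed.

Lemma indp_Aut : indp \in AutTw le.
Proof.
rewrite inE; apply/forallP => a; apply/forallP => b; apply/eqP.
rewrite /twin_le !permE /=.
apply/idP/idP.
  move=> /existsP[x /andP[xa /existsP[y /andP[yb lxy]]]].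
  apply/existsP; exists (phi x); rewrite mem_imset ?xa; last exact: perm_inj.
  by apply/existsP; exists (phi y); rewrite mem_imset ?yb ?AutP_le //; apply: perm_inj.
move=> /existsP[x' /andP[/imsetP[x xa ->] /existsP[y' /andP[/imsetP[y yb ->] lxy]]]].
apply/existsP; exists x; rewrite xa; apply/existsP; exists y; rewrite yb.
by rewrite -AutP_le.
Qed.

End Aut.
Set Implicit Arguments. Unset Strict Implicit. Unset Printing Implicit Defensive.
Local Open Scope group_scope.

Section Surj.
Variable n : nat.
Variable le : rel 'I_n.
Hypothesis le_refl : reflexive le.
Variable psi : {perm TC le}.
Hypothesis psiA : psi \in AutTw le.
Hypothesis hsz : forall a, #|val (psi a)| = #|val a|.

Definition gx (x : 'I_n) : 'I_n :=
  nth x (enum (val (psi (clsT le x)))) (index x (enum (val (clsT le x)))).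

Lemma idx_lt x : index x (enum (val (clsT le x))) < size (enum (val (psi (clsT le x)))).
Proof. by rewrite -cardE hsz cardE index_mem mem_enum cls_in. Qed.

Lemma gx_in x : gx x \in val (psi (clsT le x)).
Proof. by rewrite /gx -mem_enum mem_nth // idx_lt. Qed.

Lemma gx_inj : injective gx.
Proof.
move=> x y exy.
have ec : clsT le x = clsT le y.
  apply: (@perm_inj _ psi); apply: (@TC_eq _ le _ _ (gx x) (gx y)); first exact: gx_in.
    exact: gx_in.
  by rewrite exy twin_refl.
move: exy; rewrite /gx (set_nth_default y x (idx_lt x)) ec.
move=> /eqP; rewrite nth_uniq ?enum_uniq //; first last.
- exact: idx_lt y.
- by move: (idx_lt x); rewrite ec.
move=> /eqP eidx.
have hx : x \in enum (val (clsT le y)) by rewrite -ec mem_enum cls_in.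
have hy : y \in enum (val (clsT le y)) by rewrite mem_enum cls_in.
by rewrite -(nth_index x hx) eidx (nth_index x hy).
Qed.

Definition gphi : {perm 'I_n} := perm gx_inj.

Lemma gphi_Aut : gphi \in AutP le.
Proof.
rewrite inE; apply/forallP => x; apply/forallP => y; apply/eqP.
rewrite (@le_TC _ le le_refl (clsT le x) (clsT le y) x y (cls_in le x) (cls_in le y)) !permE.
rewrite (le_TC le_refl (gx_in x) (gx_in y)) (inj_eq perm_inj) (inj_eq gx_inj).
case: ifP => // _.
by move: psiA; rewrite inE => /forallP/(_ (clsT le x))/forallP/(_ (clsT le y))/eqP.
Qed.

Lemma gphi_induces : induces le gphi psi.
Proof.
move=> a; apply/eqP; rewrite eq_sym eqEcard card_imset ?hsz ?leqnn ?andbT; last exact: perm_inj.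
apply/subsetP => z /imsetP[x xa ->]; rewrite permE.
by rewrite (TC_cls xa) gx_in.
Qed.

End Surj.
Set Implicit Arguments. Unset Strict Implicit. Unset Printing Implicit Defensive.
Local Open Scope group_scope.

Section Iso.
Variable T : finType.
Variable A : {set T}.
Variable x0 : T.
Hypothesis x0A : x0 \in A.

Definition liftf (q : {perm 'I_#|A|}) (x : T) : T :=
  if x \in A then enum_val (q (enum_rank_in x0A x)) else x.

Lemma liftf_in q x : (liftf q x \in A) = (x \in A).
Proof. rewrite /liftf; case xA: (x \in A); [exact: enum_valP | by rewrite xA]. Qed.

Lemma liftf_inj q : injective (liftf q).
Proof.
move=> x y; case xA: (x \in A); case yA: (y \in A).
- rewrite /liftf xA yA => /(congr1 (enum_rank_in x0A)); rewrite !enum_valK_in.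
  move/perm_inj => e; by rewrite -(enum_rankK_in x0A xA) e enum_rankK_in.
- by move=> e; move: (liftf_in q x); rewrite e xA /liftf yA yA.
- by move=> e; move: (liftf_in q y); rewrite -e yA /liftf xA xA.
- by rewrite /liftf xA yA.
Qed.

Definition liftp q : {perm T} := perm (@liftf_inj q).

Lemma liftpM : {in [set: {perm 'I_#|A|}] &, {morph liftp : q1 q2 / q1 * q2}}.
Proof.
move=> q1 q2 _ _; apply/permP => x; rewrite permM !permE /liftf.
case: ifP => xA; last by rewrite xA.
by rewrite enum_valP enum_valK_in permM.
Qed.

Canonical liftp_morph := Morphism liftpM.

Lemma Sym_isog : Sym A \isog [set: {perm 'I_#|A|}].
Proof.
rewrite isog_sym; apply/isogP; exists liftp_morph.
  apply/injmP => q1 q2 _ _ /= e; apply/permP => i.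
  move: (congr1 (fun p : {perm T} => p (enum_val i)) e) => /=.
  rewrite !permE /liftf enum_valP !enum_valK_in.
  exact: enum_val_inj.
apply/eqP; rewrite morphimEdom eqEcard card_imset; last first.
  move=> q1 q2 e; apply/permP => i.
  move: (congr1 (fun p : {perm T} => p (enum_val i)) e) => /=.
  rewrite !permE /liftf enum_valP !enum_valK_in.
  exact: enum_val_inj.
rewrite cardsT card_Sym card_Sn leqnn andbT.
apply/subsetP => p /imsetP[q _ ->]; rewrite inE; apply/subsetP => x.
rewrite inE /= permE /liftf; case: ifP => //; by rewrite eqxx.
Qed.

End Iso.
Set Implicit Arguments. Unset Strict Implicit. Unset Printing Implicit Defensive.
Local Open Scope group_scope.

Section DP.
Variable T : finType.
Implicit Types (A B C : {set T}) (s : seq {set T}) (p h k : {perm T}).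

Fixpoint disj_seq s : bool :=
  if s is A :: s' then [disjoint A & \bigcup_(B <- s') B] && disj_seq s' else true.

Definition NN s := \bigcap_(B <- s) 'N(B | 'P).
Lemma NN_group_set s : group_set (NN s).
Proof.
rewrite /NN; elim/big_rec: _ => [|i G _ gG]; first exact: groupP.
by rewrite -(insubdK 1%G gG) groupP.
Qed.
Canonical NN_group s := group (NN_group_set s).

Lemma memNN p s : (p \in NN s) = all (fun B => p \in 'N(B | 'P)) s.
Proof.
rewrite /NN; elim: s => [|B s IH]; first by rewrite big_nil inE.
by rewrite big_cons inE IH.
Qed.

Lemma sub_cover B s : B \in s -> B \subset \bigcup_(C <- s) C.
Proof.
rewrite /NN; elim: s => [|C s IH] //; rewrite inE big_cons => /orP[/eqP->|/IH h].
  exact: subsetUl.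
exact: subset_trans h (subsetUr _ _).
Qed.

Lemma Sym_N A B h : [disjoint A & B] -> perm_on A h -> h \in 'N(B | 'P).
Proof.
move=> dAB hA; apply/astabsP => x /=; rewrite apermE.
case xA: (x \in A); last by rewrite (out_perm hA) ?xA.
have hxA : h x \in A by rewrite (perm_closed _ hA).
by rewrite (disjointFr dAB xA) (disjointFr dAB hxA).
Qed.

Lemma perm_onU A C h : perm_on A h -> perm_on (A :|: C) h.
Proof. by move=> hA; apply: subset_trans hA (subsetUl _ _). Qed.
Lemma perm_onU2 A C h : perm_on C h -> perm_on (A :|: C) h.
Proof. by move=> hA; apply: subset_trans hA (subsetUr _ _). Qed.

Lemma bigdprod_Sym s : disj_seq s ->
  \big[dprod/1]_(A <- s) Sym A = Sym (\bigcup_(B <- s) B) :&: NN s.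
Proof.
elim: s => [|A s IH].
  move=> _; rewrite !big_nil /NN big_nil setIT; apply/setP => p; rewrite !inE.
  apply/eqP/idP => [->|h]; first exact: perm_on1.
  by apply: perm_on_id h _; rewrite cards0.
move=> /= /andP[dA ds]; rewrite [LHS]big_cons IH //.
set C := \bigcup_(B <- s) B.
rewrite dprodE; first last.
- apply/trivgP; apply/subsetP => p /setIP[]; rewrite !inE => pA /andP[pC _].
  apply/eqP/permP => x; rewrite perm1.
  case xA: (x \in A); last by rewrite (out_perm pA) ?xA.
  by rewrite (out_perm pC) // (disjointFr dA xA).
- apply/subsetP => k /setIP[]; rewrite inE => kC _.
  apply/centP => h; rewrite inE => hA.
  exact: commute_sym (perm_onC hA kC dA).
rewrite /NN big_cons -/(NN s) big_cons -/C.
apply/setP => p; apply/idP/idP.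
  move=> /mulsgP[h k]; rewrite inE => hA /setIP[]; rewrite inE => kC kN ->.
  have kNA : k \in 'N(A | 'P) by apply: Sym_N kC; rewrite disjoint_sym.
  have hN : h \in NN s.
    rewrite memNN; apply/allP => B Bs; apply: Sym_N hA.
    exact: disjointWr (sub_cover Bs) dA.
  have hNA : h \in 'N(A | 'P).
    by apply/astabsP => x /=; rewrite apermE (perm_closed _ hA).
  apply/setIP; split; first by rewrite inE perm_onM ?(perm_onU _ hA) ?(perm_onU2 _ kC).
  apply/setIP; split; first exact: groupM.
  rewrite -/(NN s); exact: groupM.
move=> /setIP[]; rewrite inE => pAC /setIP[pNA pN].
set h := restr_perm A p.
have hA : perm_on A h by apply: restr_perm_on.
have hN : h \in NN s.
  rewrite memNN; apply/allP => B Bs; apply: Sym_N hA.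
  exact: disjointWr (sub_cover Bs) dA.
have -> : p = h * (h^-1 * p) by rewrite mulgA mulgV mul1g.
apply: mem_mulg; first by rewrite inE.
apply/setIP; split; last by rewrite groupM ?groupV //.
rewrite inE.
apply/subsetP => x; rewrite inE; apply: contraR => xC; apply/eqP.
rewrite permM.
case xA: (x \in A).
  have yA : h^-1 x \in A by rewrite (perm_closed _ (perm_onV hA)).
  by rewrite -(restr_permE pNA yA) permKV.
rewrite (out_perm (perm_onV hA)) ?xA // (out_perm pAC) // inE xA.
exact: xC.
Qed.

End DP.
Set Implicit Arguments. Unset Strict Implicit. Unset Printing Implicit Defensive.
Local Open Scope group_scope.

Lemma disj_cover (T : finType) (A : {set T}) (s : seq {set T}) :
  (forall B, B \in s -> [disjoint A & B]) -> [disjoint A & \bigcup_(B <- s) B].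
Proof.
elim: s => [|B s IH] h; first by rewrite big_nil -setI_eq0 setI0.
rewrite big_cons -setI_eq0 setIUr setU_eq0 !setI_eq0 h ?inE ?eqxx //=.
by rewrite -setI_eq0 setI_eq0 IH // => C Cs; apply: h; rewrite inE Cs orbT.
Qed.

Lemma disj_uniq (T : finType) (s : seq {set T}) : uniq s ->
  {in s &, forall A B : {set T}, A != B -> [disjoint A & B]} -> disj_seq s.
Proof.
elim: s => [|A s IH] //= /andP[As us] h.
rewrite IH //; last by move=> B C Bs Cs; apply: h; rewrite inE ?Bs ?Cs orbT.
rewrite andbT; apply: disj_cover => B Bs; apply: h; rewrite ?inE ?eqxx ?Bs ?orbT //.
by apply: contraNneq As => ->.
Qed.
Unset Implicit Arguments. Set Strict Implicit. Set Printing Implicit Defensive.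
Local Open Scope group_scope.

Theorem proposition4p6 (n : nat) (le : rel 'I_n) :
  is_NL_poset le ->
  (forall phi, phi \in AutP le ->
     (exists2 psi, psi \in AutTw le & induces le phi psi) /\
     (forall psi1 psi2, induces le phi psi1 -> induces le phi psi2 -> psi1 = psi2)) /\
  (forall phi1 phi2 psi1 psi2,
     phi1 \in AutP le -> phi2 \in AutP le ->
     induces le phi1 psi1 -> induces le phi2 psi2 ->
     induces le (phi1 * phi2) (psi1 * psi2)) /\
  (forall phi : {perm 'I_n},
     (phi \in AutP le /\ induces le phi 1) <->
     (forall A, A \in twin_classes le -> phi @: A = A)) /\
  [set phi : {perm 'I_n} | [forall A in twin_classes le, phi @: A == A]]
     = \big[dprod/1]_(A in twin_classes le) Sym A /\
  (forall A, A \in twin_classes le -> Sym A \isog [set: {perm 'I_#|A|}]) /\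
  ((forall psi, psi \in AutTw le -> exists2 phi, phi \in AutP le & induces le phi psi)
   <->
   (forall psi, psi \in AutTw le -> forall a, #|val (psi a)| = #|val a|)).
Proof.
case=> le_refl _ _ _.
split.
  move=> phi phiA; split; first by exists (indp phiA); [exact: indp_Aut | exact: indp_induces].
  move=> psi1 psi2 h1 h2; apply/permP => a; apply: val_inj; by rewrite h1 h2.
split.
  move=> phi1 phi2 psi1 psi2 _ _ h1 h2 a.
  rewrite permM h2 h1 -imset_comp; apply: eq_imset => x; by rewrite permM.
split.
  move=> phi; split.
    move=> [_ hind] A HA; have := hind (exist _ A HA); rewrite perm1 /= => e.
    by rewrite -e.
  move=> h.
  have mem (a : TC le) x : (phi x \in val a) = (x \in val a).
    exact: (perm_imset_memE (h _ (valP a)) x).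
  split; last by move=> a; rewrite perm1 (h _ (valP a)).
  rewrite inE; apply/forallP => x; apply/forallP => y; apply/eqP.
  have hx : phi x \in val (clsT le x) by rewrite mem cls_in.
  have hy : phi y \in val (clsT le y) by rewrite mem cls_in.
  rewrite (@le_TC _ le le_refl (clsT le x) (clsT le y) x y (cls_in le x) (cls_in le y)).
  by rewrite (le_TC le_refl hx hy) (inj_eq perm_inj).
split.
  rewrite -big_enum bigdprod_Sym; last first.
    apply: disj_uniq; first exact: enum_uniq.
    move=> A B; rewrite !mem_enum => /imsetP[x _ ->] /imsetP[y _ ->] nAB.
    apply/pred0P => z /=; apply/negbTE/negP; rewrite !inE => /andP[xz yz].
    move/eqP: nAB; apply; apply/setP => w; rewrite !inE.
    have txy : twin le x y by apply: twin_trans xz _; rewrite twin_sym.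
    apply/idP/idP => h; first by apply: twin_trans h; rewrite twin_sym.
    exact: twin_trans txy h.
  have cov : \bigcup_(B <- enum (twin_classes le)) B = setT.
    apply/setP => x; rewrite inE; apply: (subsetP (sub_cover _)) (cls_in le x).
    by rewrite mem_enum cls_tc.
  rewrite cov; apply/setP => p.
  have pS : p \in Sym [set: 'I_n] by rewrite inE; apply/subsetP => x _; rewrite inE.
  rewrite inE in_setI pS memNN /=.
  apply/forallP/allP => [h A|h A].
    rewrite mem_enum => HA; apply/astabsP => x /=; rewrite apermE.
    apply: perm_imset_memE; apply/eqP; exact: (implyP (h A) HA).
  apply/implyP => HA; apply/eqP; apply: perm_imset_memP => x.
  have hA : A \in enum (twin_classes le) by rewrite mem_enum.
  by move: (h A hA) => /astabsP /(_ x).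
split.
  move=> A /imsetP[x _ ->]; exact: (Sym_isog (cls_in le x)).
split.
  move=> hs psi psiA a; have [phi phiA hind] := hs psi psiA.
  by rewrite hind card_imset //; apply: perm_inj.
move=> hs psi psiA; exists (gphi (hs psi psiA)).
  exact: (gphi_Aut le_refl psiA (hs psi psiA)).
exact: gphi_induces.
Qed.
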